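(* Let $(x^k)$ be generated by the augmented Lagrangian method described below, where each step satisfies the inexactness assumption described below with $\varepsilon_k\downarrow0$, and let $\bar x$ be a limit point of $(x^k)$. Assume that one of the following holds: (a) $\bar x$ is feasible for the GNEP and GNEP-CPLD holds in $\bar x$; (b) GNEP-EMFCQ holds in $\bar x$. Then $\bar x$ is a KKT point of the GNEP.
   Context: GNEP: $N$ players, variables $x=(x^1,\ldots,x^N)\in\mathbb{R}^n$, $x^\nu\in\mathbb{R}^{n_\nu}$. Player $\nu$ solves $\min_{x^\nu}\theta_\nu(x)$ s.t. $c^\nu(x):=(g^\nu(x),h^\nu(x))\le0$, with continuously differentiable $\theta_\nu:\mathbb{R}^n\to\mathbb{R}$, $g^\nu:\mathbb{R}^n\to\mathbb{R}^{m_\nu}$, $h^\nu:\mathbb{R}^n\to\mathbb{R}^{p_\nu}$ ($p_\nu=0$ allowed); $m=\sum m_\nu$, $p=\sum p_\nu$. Notation: $v_+=\max\{0,v\}$ componentwise; $\nabla f$ = transposed Jacobian, $\nabla_{x^\nu}f$ its rows for $x^\nu$; $\min$ componentwise; Euclidean norms. Vectors in $\mathbb{R}^m$ (resp. $\mathbb{R}^p$) are split into player blocks. KKT point of the GNEP: $x$ such that for every $\nu$ there are multipliers $\lambda^\nu\in\mathbb{R}^{m_\nu+p_\nu}$ with $\nabla_{x^\nu}\theta_\nu(x)+\nabla_{x^\nu}c^\nu(x)\lambda^\nu=0$ and $\min\{-c^\nu(x),\lambda^\nu\}=0$. Constraint qualifications (with respect to $c^\nu$): vectors are positively linearly dependent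 if a nontrivial nonnegative combination vanishes. CPLD$_\nu$ at $x$ with $c^\nu(x)\le0$: whenever $\nabla_{x^\nu}c_i^\nu(x)$, $i\in I$, are positively linearly dependent for some $I\subset\{i:c_i^\nu(x)=0\}$, the vectors $\nabla_{x^\nu}c_i^\nu(y)$, $i\in I$, are linearly dependent for all $y$ in a neighbourhood of $x$; GNEP-CPLD at $x$ means CPLD$_\nu$ at $x$ for all $\nu$. GNEP-EMFCQ at $x$: for every $\nu$ there is $d^\nu$ with $\nabla_{x^\nu}c_i^\nu(x)^Td^\nu<0$ for every $i$ with $c_i^\nu(x)\ge0$. Augmented Lagrangian of player $\nu$: $L_a^\nu(x,u;\rho)=\theta_\nu(x)+\frac{\rho}{2}\|(g^\nu(x)+u/\rho)_+\|^2$. Method: choose $x^0\in\mathbb{R}^n,\lambda^0\in\mathbb{R}^m,\mu^0\in\mathbb{R}^p$, an initial $u^0\in\mathbb{R}^m$, $u^{\max}\ge0$, and for each $\nu$: $\tau_\nu\in(0,1)$, $\gamma_\nu>1$, $\rho_{\nu,0}>0$. For $k=0,1,2,\dots$ (the method is assumed to run forever): (1) compute $(x^{k+1},\mu^{k+1})\in\mathbb{R}^{n+p}$ satisfying the inexactness assumption; (2) $\lambda^{\nu,k+1}=(u^{\nu,k}+\rho_{\nu,k}g^\nu(x^{k+1}))_+$; (3) for each $\nu$: if $\|\min\{-g^\nu(x^{k+1}),\lambda^{\nu,k+1}\}\|\le\tau_\nu\|\min\{-g^\nu(x^k),\lambda^{\nu,k}\}\|$ then $\rho_{\nu,k+1}=\rho_{\nu,k}$,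 else $\rho_{\nu,k+1}=\gamma_\nu\rho_{\nu,k}$; (4) $u^{k+1}=\min\{\lambda^{k+1},u^{\max}\}$ componentwise. Inexactness assumption: for all $k,\nu$, $\|\nabla_{x^\nu}L_a^\nu(x^{k+1},u^{\nu,k};\rho_{\nu,k})+\nabla_{x^\nu}h^\nu(x^{k+1})\mu^{\nu,k+1}\|\le\varepsilon_k$ and $\|\min\{-h^\nu(x^{k+1}),\mu^{\nu,k+1}\}\|\le\varepsilon_k'$, with $(\varepsilon_k)\subset[0,\infty)$ bounded and $\varepsilon'_k\to0$. *)

(* Defs.v *)
From HB Require Import structures.
From mathcomp Require Import all_boot all_order all_algebra.
From mathcomp Require Import all_classical all_reals.
From mathcomp Require Import topology normedtype sequences derive.
Set Implicit Arguments. Unset Strict Implicit. Unset Printing Implicit Defensive.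
Import Order.TTheory GRing.Theory Num.Theory.
Import numFieldNormedType.Exports.
Local Open Scope ring_scope.

(* Encoding of the GNEP:  the full variable x lives in 'rV[R]_n; the map
   blk : 'I_n -> 'I_N assigns every coordinate to its player, so that
   x^nu is the family of coordinates j with blk j = nu.  Likewise the
   constraints g : 'I_m -> ('rV_n -> R) are split into player blocks by
   gblk : 'I_m -> 'I_N, and h : 'I_p -> ('rV_n -> R) by hblk. *)

Section GNEP.
Variable R : realType.
Variable n : nat.

Definition evec (j : 'I_n) : 'rV[R]_n := delta_mx 0 j.

Definition partial (f : 'rV[R]_n -> R) (j : 'I_n) (x : 'rV[R]_n) : R :=
  derive f x (evec j).

Definition C1 (f : 'rV[R]_n -> R) : Prop :=
  (forall x, differentiable f x) /\ (forall j, continuous (partial f j)).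

Definition bnorm (I : finType) (P : pred I) (v : I -> R) : R :=
  Num.sqrt (\sum_(i | P i) v i ^+ 2).

Definition cfun (m p : nat) (g : 'I_m -> 'rV[R]_n -> R) (h : 'I_p -> 'rV[R]_n -> R)
  (i : 'I_m + 'I_p) : 'rV[R]_n -> R :=
  match i with inl i => g i | inr i => h i end.

Definition cblk (N m p : nat) (gblk : 'I_m -> 'I_N) (hblk : 'I_p -> 'I_N)
  (i : 'I_m + 'I_p) : 'I_N :=
  match i with inl i => gblk i | inr i => hblk i end.

Definition La (N m : nat) (theta : 'I_N -> 'rV[R]_n -> R)
  (g : 'I_m -> 'rV[R]_n -> R) (gblk : 'I_m -> 'I_N) (nu : 'I_N)
  (x : 'rV[R]_n) (u : 'I_m -> R) (rho : R) : R :=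
  theta nu x + rho / 2 *
    \sum_(i | gblk i == nu) (Num.max 0 (g i x + u i / rho)) ^+ 2.

Definition pos_lin_dep (N : nat) (blk : 'I_n -> 'I_N) (nu : 'I_N)
  (I : finType) (S : {set I}) (v : I -> 'I_n -> R) : Prop :=
  exists a : I -> R,
    (forall i, i \in S -> 0 <= a i) /\
    (exists2 i, i \in S & a i != 0) /\
    (forall j, blk j = nu -> \sum_(i in S) a i * v i j = 0).

Definition lin_dep (N : nat) (blk : 'I_n -> 'I_N) (nu : 'I_N)
  (I : finType) (S : {set I}) (v : I -> 'I_n -> R) : Prop :=
  exists a : I -> R,
    (exists2 i, i \in S & a i != 0) /\
    (forall j, blk j = nu -> \sum_(i in S) a i * v i j = 0).

Definition gnep_feasible (m p : nat) (g : 'I_m -> 'rV[R]_n -> R)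
  (h : 'I_p -> 'rV[R]_n -> R) (x : 'rV[R]_n) : Prop :=
  (forall i, g i x <= 0) /\ (forall i, h i x <= 0).

Definition gnep_cpld (N m p : nat) (blk : 'I_n -> 'I_N)
  (g : 'I_m -> 'rV[R]_n -> R) (gblk : 'I_m -> 'I_N)
  (h : 'I_p -> 'rV[R]_n -> R) (hblk : 'I_p -> 'I_N) (x : 'rV[R]_n) : Prop :=
  forall (nu : 'I_N) (S : {set ('I_m + 'I_p)%type}),
    (forall i, i \in S -> cblk gblk hblk i = nu /\ cfun g h i x = 0) ->
    pos_lin_dep blk nu S (fun i j => partial (cfun g h i) j x) ->
    \forall y \near x, lin_dep blk nu S (fun i j => partial (cfun g h i) j y).

Definition gnep_emfcq (N m p : nat) (blk : 'I_n -> 'I_N)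
  (g : 'I_m -> 'rV[R]_n -> R) (gblk : 'I_m -> 'I_N)
  (h : 'I_p -> 'rV[R]_n -> R) (hblk : 'I_p -> 'I_N) (x : 'rV[R]_n) : Prop :=
  forall nu : 'I_N, exists d : 'I_n -> R,
    forall i : 'I_m + 'I_p, cblk gblk hblk i = nu -> 0 <= cfun g h i x ->
      \sum_(j | blk j == nu) partial (cfun g h i) j x * d j < 0.

Definition gnep_kkt (N m p : nat) (blk : 'I_n -> 'I_N)
  (theta : 'I_N -> 'rV[R]_n -> R)
  (g : 'I_m -> 'rV[R]_n -> R) (gblk : 'I_m -> 'I_N)
  (h : 'I_p -> 'rV[R]_n -> R) (hblk : 'I_p -> 'I_N) (x : 'rV[R]_n) : Prop :=
  forall nu : 'I_N, exists lam : 'I_m + 'I_p -> R,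
    (forall j, blk j = nu ->
       partial (theta nu) j x +
       \sum_(i | cblk gblk hblk i == nu) partial (cfun g h i) j x * lam i = 0) /\
    (forall i, cblk gblk hblk i = nu -> Num.min (- cfun g h i x) (lam i) = 0).

End GNEP.

(* Main.v *)
Require Import Defs.
From HB Require Import structures.
From mathcomp Require Import all_boot all_order all_algebra.
From mathcomp Require Import all_classical all_reals.
From mathcomp Require Import topology normedtype sequences derive.
From mathcomp Require Import ring lra.
Import Order.TTheory GRing.Theory Num.Theory.
Import numFieldNormedType.Exports.
Local Open Scope classical_set_scope.
Local Open Scope ring_scope.

Local Close Scope classical_set_scope.
Section Cara.
Variable R : realType.
Variables (n N : nat) (blk : 'I_n -> 'I_N) (nu : 'I_N) (T : finType) (G : T -> 'I_n -> R).

Lemma reduce_step (w : T -> R) :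
  (forall i, 0 <= w i) ->
  lin_dep blk nu [set i | w i != 0] G ->
  exists v : T -> R, [/\ (forall i, 0 <= v i), (forall i, w i = 0 -> v i = 0),
    (forall j, blk j = nu -> \sum_i v i * G i j = \sum_i w i * G i j) &
    (#|[set i | v i != 0%R]| < #|[set i | w i != 0%R]|)%N].
Proof.
move=> w0 [a [[i1 i1S a1] Ha]].
set S := [set i | w i != 0] in i1S Ha *.
pose sg : R := if 0 < a i1 then 1 else -1.
pose a' := fun i => sg * a i.
have a'1 : 0 < a' i1.
  rewrite /a' /sg; case: ifP => [H|/negbT]; first by rewrite mul1r.
  rewrite -leNgt => H; rewrite mulN1r.
  by rewrite oppr_gt0 lt_neqAle a1 H.
have Ha' : forall j, blk j = nu -> \sum_(i in S) a' i * G i j = 0.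
  move=> j /Ha Hj; rewrite /a'.
  rewrite (eq_bigr (fun i => sg * (a i * G i j))); last by move=> i _; rewrite mulrA.
  by rewrite -mulr_sumr Hj mulr0.
pose P := [pred i | (i \in S) && (0 < a' i)].
have P1 : P i1 by rewrite /P /= i1S a'1.
have := arg_minP (fun i => w i / a' i) P1.
case=> i0 /andP[i0S a'0] Hmin.
set t := w i0 / a' i0.
have wpos : forall i, i \in S -> 0 < w i.
  by move=> i; rewrite inE => H; rewrite lt_neqAle eq_sym H w0.
have t0 : 0 <= t by rewrite /t divr_ge0 // ltW.
pose v := fun i => w i - t * (if i \in S then a' i else 0).
exists v; split.
- move=> i; rewrite /v; case: ifP => iS; last by rewrite mulr0 subr0.
  case: (ltP 0 (a' i)) => ai.
    have := Hmin i; rewrite /P /= iS ai => /(_ isT).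
    rewrite -/t ler_pdivlMr // => H; lra.
  have := w0 i; have : 0 <= t * - a' i by rewrite mulr_ge0 // oppr_ge0. lra.
- move=> i wi; rewrite /v; case: ifP => iS; last by rewrite mulr0 subr0.
  by move: iS; rewrite inE wi eqxx.
- move=> j bj; rewrite /v.
  under eq_bigr do rewrite mulrBl.
  rewrite sumrB; apply/eqP; rewrite subr_eq addrC -subr_eq subrr eq_sym; apply/eqP.
  under eq_bigr do rewrite -mulrA.
  rewrite -mulr_sumr.
  have -> : \sum_i (if i \in S then a' i else 0) * G i j = \sum_(i in S) a' i * G i j.
    rewrite [RHS]big_mkcond /=; apply: eq_bigr => i _; by case: ifP => _; rewrite ?mul0r.
  by rewrite Ha' // mulr0.
- have sub : [set i | v i != 0] \subset S :\ i0.
    apply/fintype.subsetP => i; rewrite !inE /v.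
    case: ifP => iS; last by rewrite mulr0 subr0 => H; move: iS; rewrite inE H.
    move=> H; apply/andP; split; last by move: iS; rewrite inE.
    apply: contra_neq H => ->; rewrite /t divfK ?subrr //.
    by rewrite gt_eqF.
  apply: (leq_ltn_trans (subset_leq_card sub)).
  by rewrite (cardsD1 i0 S) i0S.
Qed.

Lemma caratheodory (A : {set T}) (w : T -> R) :
  (forall i, 0 <= w i) -> (forall i, i \notin A -> w i = 0) ->
  exists S : {set T}, exists v : T -> R,
   [/\ S \subset A, (forall i, 0 <= v i), (forall i, i \notin S -> v i = 0),
       ~ lin_dep blk nu S G &
       (forall j, blk j = nu -> \sum_i v i * G i j = \sum_i w i * G i j)].
Proof.
move=> w0 wA.
suff H : forall k (w : T -> R), (forall i, 0 <= w i) -> (forall i, i \notin A -> w i = 0) ->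
   (#|[set i | w i != 0%R]| <= k)%N ->
   exists S : {set T}, exists v : T -> R,
   [/\ S \subset A, (forall i, 0 <= v i), (forall i, i \notin S -> v i = 0),
       ~ lin_dep blk nu S G &
       (forall j, blk j = nu -> \sum_i v i * G i j = \sum_i w i * G i j)].
  exact: H (leqnn _).
elim=> [|k IH] {}w {}w0 {}wA hk.
  have S0 : [set i | w i != 0] = finset.set0 by apply/eqP; rewrite -cards_eq0 -leqn0.
  exists finset.set0, w; split => //.
  - by rewrite finset.sub0set.
  - by move=> i _; apply/eqP; apply: contraT => H; rewrite -(finset.in_set0 i) -S0 inE.
  - by case=> a [[i]]; rewrite finset.in_set0.
case: (pselect (lin_dep blk nu [set i | w i != 0] G)) => [LD|NLD]; last first.
  exists [set i | w i != 0], w; split => //.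
  - apply/fintype.subsetP => i; rewrite inE; apply: contraR => /wA ->; by rewrite eqxx.
  - by move=> i; rewrite inE negbK => /eqP.
have [v [v0 vw vG vc]] := @reduce_step w w0 LD.
have vA : forall i, i \notin A -> v i = 0 by move=> i /wA /vw.
have [S [u [SA u0 uS uLD uG]]] := IH v v0 vA (leq_trans vc hk).
exists S, u; split => // j bj; by rewrite uG // vG.
Qed.

End Cara.

Local Open Scope classical_set_scope.
Local Open Scope ring_scope.

Section Seqs.
Variable R : realType.

Lemma cvg_sub (T : topologicalType) (u : nat -> T) (l : T) (psi : nat -> nat) :
  (forall k, (k <= psi k)%N) -> u @ \oo --> l -> (u \o psi) @ \oo --> l.
Proof.
move=> Hpsi Hu; apply: cvg_comp Hu.
move=> A [N _ NA]; exists N => // k /= Nk; apply: NA; exact: leq_trans Nk (Hpsi k).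
Qed.

Lemma pigeon_subseq (T : finType) (S : nat -> T) :
  exists S0 : T, exists sigma : nat -> nat,
    (forall k, (k <= sigma k)%N) /\ (forall k, S (sigma k) = S0).
Proof.
suff [S0 HS0] : exists S0, forall K, exists k, (K <= k)%N /\ S k = S0.
  have [f Hf] := choice HS0.
  by exists S0, f; split => k; case: (Hf k).
apply: contrapT => H.
have H' : forall S0, exists K, forall k, (K <= k)%N -> S k <> S0.
  move=> S0; apply: contrapT => H2; apply: H; exists S0 => K.
  apply: contrapT => H3; apply: H2; exists K => k Kk Sk; apply: H3; by exists k.
have [Kf HK] := choice H'.
pose M := (\max_(s : T) Kf s)%N.
apply: (HK (S M) M) => //.
exact: (leq_bigmax (S M)).
Qed.

Lemma increasing_ge (f : nat -> nat) : increasing_seq f -> forall k, (k <= f k)%N.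
Proof.
move/increasing_seqP => H; elim=> [//|k IH].
exact: leq_ltn_trans IH (H k).
Qed.

Lemma multi_bw (I : finType) (z : nat -> I -> R) (B : R) :
  (forall k i, `|z k i| <= B) ->
  exists f : nat -> nat, (forall k, (k <= f k)%N) /\
    forall i, exists l : R, (fun k => z (f k) i) @ \oo --> l.
Proof.
move=> Hb.
suff H : forall s : seq I, exists f : nat -> nat, (forall k, (k <= f k)%N) /\
    forall i, i \in s -> exists l : R, (fun k => z (f k) i) @ \oo --> l.
  have [f [f1 f2]] := H (enum I).
  by exists f; split => // i; apply: f2; rewrite mem_enum.
elim=> [|a s [f [f1 f2]]].
  by exists id; split.
have bnd : bounded_fun (fun k => z (f k) a).
  exists B; split; first by rewrite num_real.
  move=> M hM k _ /=; apply: le_trans (Hb _ _) (ltW hM).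
have [g gi gc] := bolzano_weierstrass bnd.
move/cvg_ex: gc => [la Hla].
have g1 := @increasing_ge g gi.
exists (f \o g); split.
  by move=> k /=; apply: leq_trans (g1 k) (f1 _).
move=> i; rewrite inE => /orP[/eqP ->|iis].
  by exists la.
have [l Hl] := f2 i iis.
exists l; exact: (@cvg_sub _ (fun k => z (f k) i) l g g1 Hl).
Qed.

Lemma cvg_bigsum (I : Type) (s : seq I) (P : pred I) (f : I -> nat -> R) (l : I -> R) :
  (forall i, P i -> f i @ \oo --> l i) ->
  (fun k => \sum_(i <- s | P i) f i k) @ \oo --> \sum_(i <- s | P i) l i.
Proof.
move=> Hf; elim: s => [|a s IH].
  under eq_fun do rewrite big_nil. rewrite big_nil; exact: cvg_cst.
under eq_fun do rewrite big_cons. rewrite big_cons.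
case: (boolP (P a)) => Pa //.
exact: cvgD (Hf a Pa) IH.
Qed.

Lemma max0r_pos (t : R) : 0 <= t -> Num.max 0 t = t.
Proof. exact: max_r. Qed.
Lemma max0r_neg (t : R) : t <= 0 -> Num.max 0 t = 0.
Proof. exact: max_l. Qed.
Lemma min_eq0 (a b : R) : 0 <= a -> 0 <= b -> (a == 0) || (b == 0) -> Num.min a b = 0.
Proof.
move=> a0 b0 /orP[/eqP->|/eqP->]; [exact: min_l | exact: min_r].
Qed.

Lemma cvg_near_le (u : nat -> R) (l e : R) : u @ \oo --> l -> l < e -> \forall k \near \oo, u k < e.
Proof.
move=> Hu le.
have : \forall k \near \oo, `|l - u k| < e - l.
  by move/cvgrPdist_lt : Hu; apply; rewrite subr_gt0.
apply: filterS => k.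
rewrite ltr_norml => /andP[H1 H2]; lra.
Qed.

Lemma cvg_near_ge (u : nat -> R) (l e : R) : u @ \oo --> l -> e < l -> \forall k \near \oo, e < u k.
Proof.
move=> Hu le.
have : \forall k \near \oo, `|l - u k| < l - e.
  by move/cvgrPdist_lt : Hu; apply; rewrite subr_gt0.
apply: filterS => k.
rewrite ltr_norml => /andP[H1 H2]; lra.
Qed.

End Seqs.
Arguments cvg_near_le {R} [u l e].
Arguments cvg_near_ge {R} [u l e].

Section Core.
Variable R : realType.

Lemma lim_uniq (u : nat -> R) (a b : R) : u @ \oo --> a -> u @ \oo --> b -> a = b.
Proof. move=> Ha Hb. exact: (cvg_unique _ Ha Hb). Qed.

Lemma cvg_ge0 (u : nat -> R) (l : R) : (forall k, 0 <= u k) -> u @ \oo --> l -> 0 <= l.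
Proof.
move=> H Hu; apply: (closed_cvg (fun x : R => 0 <= x)) Hu => //.
by apply: nearW.
Qed.

Lemma cvg_cst_eq (u : nat -> R) (c l : R) : (forall k, u k = c) -> u @ \oo --> l -> l = c.
Proof.
move=> H; have -> : u = fun=> c by apply/funext.
move=> Hc; apply: lim_uniq Hc _; exact: cvg_cst.
Qed.

Variables (n N : nat) (blk : 'I_n -> 'I_N) (nu : 'I_N) (T : finType)
  (c : T -> 'rV[R]_n -> R) (cb : T -> 'I_N) (dth : 'I_n -> 'rV[R]_n -> R)
  (Dc : T -> 'I_n -> 'rV[R]_n -> R) (xbar : 'rV[R]_n).

Lemma core (y : nat -> 'rV[R]_n) (w : nat -> T -> R) :
 (forall j, {for xbar, continuous (dth j)}) ->
 (forall i j, {for xbar, continuous (Dc i j)}) ->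
 y @ \oo --> xbar ->
 (forall i, cb i = nu -> c i xbar <= 0) ->
 (forall k i, 0 <= w k i) ->
 (forall k i, ~ (cb i = nu /\ c i xbar = 0) -> w k i = 0) ->
 (forall j, blk j = nu ->
    (fun k => dth j (y k) + \sum_i w k i * Dc i j (y k)) @ \oo --> 0) ->
 (forall S : {set T}, (forall i, i \in S -> cb i = nu /\ c i xbar = 0) ->
    pos_lin_dep blk nu S (fun i j => Dc i j xbar) ->
    \forall z \near xbar, lin_dep blk nu S (fun i j => Dc i j z)) ->
 exists lam : T -> R,
   (forall j, blk j = nu -> dth j xbar + \sum_(i | cb i == nu) Dc i j xbar * lam i = 0) /\
   (forall i, cb i = nu -> Num.min (- c i xbar) (lam i) = 0).
Proof.
move=> cth cD yx feas w0 wA res CPLD.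
pose A := [set i | (cb i == nu) && (c i xbar == 0)]%SET.
have Hcar : forall k, exists Sv : {set T} * (T -> R),
   [/\ (Sv.1 \subset A)%SET, (forall i, 0 <= Sv.2 i), (forall i, i \notin Sv.1 -> Sv.2 i = 0),
       ~ lin_dep blk nu Sv.1 (fun i j => Dc i j (y k)) &
       (forall j, blk j = nu -> \sum_i Sv.2 i * Dc i j (y k) = \sum_i w k i * Dc i j (y k))].
  move=> k.
  have [||S [v H]] := @caratheodory R n N blk nu T (fun i j => Dc i j (y k)) A (w k).
  - exact: w0.
  - move=> i iA; apply: wA => -[h1 h2]; move: iA; by rewrite inE h1 h2 !eqxx.
  by exists (S, v).
have [Sv HSv] := choice Hcar.
have [S0 [sigma [sig1 sigS]]] := @pigeon_subseq _ (fun k => (Sv k).1).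
pose vv k := (Sv (sigma k)).2.
pose t k := 1 + \sum_i vv k i.
have vv0 : forall k i, 0 <= vv k i by move=> k i; case: (HSv (sigma k)) => _ H _ _ _; exact: H.
have t1 : forall k, 1 <= t k.
  by move=> k; rewrite /t lerDl; apply: sumr_ge0 => i _; exact: vv0.
have t0 : forall k, 0 < t k by move=> k; apply: lt_le_trans (t1 k).
pose z k (o : option T) := match o with None => 1 / t k | Some i => vv k i / t k end.
have zb : forall k o, `|z k o| <= 1.
  move=> k [i|] /=.
  - rewrite ger0_norm; last by rewrite divr_ge0 ?vv0 // ltW.
    rewrite ler_pdivrMr // mul1r /t.
    rewrite (bigD1 i) //=.
    have : 0 <= \sum_(j | j != i) vv k j by apply: sumr_ge0 => ? _; exact: vv0.
    lra.
  - rewrite ger0_norm; last by rewrite divr_ge0 // ltW.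
    by rewrite ler_pdivrMr // mul1r.
have [f [f1 fc]] := @multi_bw R _ z 1 zb.
have [L HL] := choice fc.
pose psi k := sigma (f k).
have psi1 : forall k, (k <= psi k)%N by move=> k; exact: leq_trans (f1 k) (sig1 _).
have ypsi : (y \o psi) @ \oo --> xbar by exact: (@cvg_sub _ _ _ _ psi1 yx).
set s := L None.
pose a i := L (Some i).
have s0 : 0 <= s.
  apply: cvg_ge0 (HL None) => k /=; exact: divr_ge0 ler01 (ltW (t0 _)).
have a0 : forall i, 0 <= a i.
  move=> i; apply: cvg_ge0 (HL (Some i)) => k /=; exact: divr_ge0 (vv0 _ _) (ltW (t0 _)).
have aS : forall i, i \notin S0 -> a i = 0.
  move=> i iS; apply: (@cvg_cst_eq _ 0 _ _ (HL (Some i))) => k /=.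
  have [_ _ H _ _] := HSv (sigma (f k)).
  by rewrite /vv H ?mul0r // sigS.
have S0A : (S0 \subset A)%SET.
  by have [H _ _ _ _] := HSv (sigma 0); rewrite -(sigS 0).
have sum1 : s + \sum_i a i = 1.
  have H1 : (fun k => z (f k) None + \sum_i z (f k) (Some i)) @ \oo --> s + \sum_i a i.
    apply: cvgD; first exact: HL.
    exact: (@cvg_bigsum R _ (index_enum T) xpredT (fun i k => z (f k) (Some i)) a (fun i _ => HL (Some i))).
  apply: (@cvg_cst_eq _ 1 _ _ H1) => k /=.
  rewrite -mulr_suml -mulrDl /t mulfV //.
  by apply/lt0r_neq0/t0.
have F4 : forall j, blk j = nu -> s * dth j xbar + \sum_i a i * Dc i j xbar = 0.
  move=> j bj.
  have Hc : (fun k => z (f k) None * dth j (y (psi k)) +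
      \sum_i z (f k) (Some i) * Dc i j (y (psi k))) @ \oo -->
      s * dth j xbar + \sum_i a i * Dc i j xbar.
    apply: cvgD.
      apply: cvgM; first exact: HL.
      exact: (continuous_cvg _ (cth j) ypsi).
    apply: (@cvg_bigsum R _ (index_enum T) xpredT (fun i k => z (f k) (Some i) * Dc i j (y (psi k)))) => i _.
    apply: cvgM; first exact: HL.
    exact: (continuous_cvg _ (cD i j) ypsi).
  apply: lim_uniq Hc _.
  have -> : (fun k => z (f k) None * dth j (y (psi k)) +
      \sum_i z (f k) (Some i) * Dc i j (y (psi k))) =
      (fun k => z (f k) None * (dth j (y (psi k)) + \sum_i w (psi k) i * Dc i j (y (psi k)))).
    apply/funext => k /=.
    have [_ _ _ _ HG] := HSv (psi k).
    rewrite -HG // mulrDr mulr_sumr; congr (_ + _); apply: eq_bigr => i _.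
    rewrite /vv /psi; ring.
  rewrite [X in _ --> X](_ : 0 = s * 0); last by rewrite mulr0.
  apply: cvgM; first exact: HL.
  exact: (@cvg_sub _ _ _ _ psi1 (res j bj)).
have aA : forall i, a i != 0 -> cb i = nu /\ c i xbar = 0.
  move=> i ai.
  have iS : i \in S0 by apply: contraR ai => /aS ->; rewrite eqxx.
  have := fintype.subsetP S0A i iS; rewrite inE => /andP[/eqP -> /eqP ->]; by [].
have sumblk : forall (F : T -> R), \sum_(i | cb i == nu) F i * a i = \sum_i a i * F i.
  move=> F; rewrite [RHS](bigID (fun i => cb i == nu)) /=.
  rewrite [X in _ = _ + X]big1 ?addr0; last first.
    move=> i /eqP ci; case: (eqVneq (a i) 0) => [->|/aA [] //]; by rewrite mul0r.
  by apply: eq_bigr => i _; rewrite mulrC.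
case: (eqVneq s 0) => [s00|sn0]; last first.
  exists (fun i => a i / s); split.
  - move=> j bj.
    rewrite (eq_bigr (fun i => (Dc i j xbar * a i) / s)); last by move=> i _; rewrite mulrA.
    rewrite -mulr_suml sumblk.
    apply: (mulfI sn0); rewrite mulr0 mulrDr mulrCA mulfV // mulr1.
    exact: F4.
  - move=> i ci.
    case: (eqVneq (a i) 0) => [->|/aA [_ ->]].
      rewrite mul0r; apply/eqP; rewrite eq_le ge_min le_min lexx andbT.
      by rewrite oppr_ge0 feas // orbT.
    apply/eqP; rewrite oppr0 eq_le ge_min le_min lexx /= divr_ge0 //.
exfalso.
have [i0 ai0] : exists i, a i != 0.
  apply: contrapT => H.
  have h0 : \sum_i a i = 0.
    apply: big1 => i _; apply/eqP; apply: contrapT => Hi; apply: H; exists i; exact/negP.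
  by move: sum1; rewrite s00 add0r h0 => /esym/eqP; rewrite oner_eq0.
have PLD : pos_lin_dep blk nu S0 (fun i j => Dc i j xbar).
  exists a; split; first by move=> i _; exact: a0.
  split.
    exists i0 => //; by apply: contraR ai0 => /aS ->; rewrite eqxx.
  move=> j bj.
  rewrite -[RHS](F4 j bj) s00 mul0r add0r [RHS](bigID (fun i => i \in S0)) /=.
  rewrite [X in _ = _ + X]big1 ?addr0 // => i /aS ->; by rewrite mul0r.
have HS : forall i, i \in S0 -> cb i = nu /\ c i xbar = 0.
  by move=> i iS; have := fintype.subsetP S0A i iS; rewrite inE => /andP[/eqP -> /eqP ->].
have := CPLD S0 HS PLD.
move=> /ypsi [M _ HM].
have := HM M (leqnn M); rewrite /=.
have [_ _ _ NLD _] := HSv (psi M).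
by rewrite /psi sigS in NLD.
Qed.
End Core.

Section Der.
Variable R : realType.

Lemma sqp_key (t h : R) :
  `|2 * Num.max 0 t * h - (Num.max 0 (h + t) ^+ 2 - Num.max 0 t ^+ 2)| <= h ^+ 2.
Proof.
rewrite ler_norml.
have [t0|t0] := boolP (0 <= t); have [ht0|ht0] := boolP (0 <= h + t).
- rewrite (max_r t0) (max_r ht0); apply/andP; split; nra.
- rewrite -ltNge in ht0; rewrite (max_r t0) (max_l (ltW ht0)); apply/andP; split; nra.
- rewrite -ltNge in t0; rewrite (max_l (ltW t0)) (max_r ht0); apply/andP; split; nra.
- rewrite -ltNge in t0; rewrite -ltNge in ht0.
  rewrite (max_l (ltW t0)) (max_l (ltW ht0)); apply/andP; split; nra.
Qed.

Lemma sqp_derive (t : R) :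
  is_derive t (1:R) (fun s : R => Num.max 0 s ^+ 2) (2 * Num.max 0 t).
Proof.
suff Hc : (fun h : R => h^-1 *: (((fun s : R => Num.max 0 s ^+ 2) \o shift t) (h *: (1:R))
     - Num.max 0 t ^+ 2)) @ 0^' --> 2 * Num.max 0 t.
  apply: DeriveDef; first by apply/cvg_ex; exists (2 * Num.max 0 t).
  exact: cvg_lim Hc.
apply/cvgrPdist_le => e e0.
near=> h.
have hn0 : h != 0 by near: h; exact: nbhs_dnbhs_neq.
have hle : `|h| <= e by near: h; exact: dnbhs0_le.
rewrite /= [_%:A]mulr1 -[h^-1 *: _]/(h^-1 * _).
have -> : 2 * Num.max 0 t - h^-1 * (Num.max 0 (h + t) ^+ 2 - Num.max 0 t ^+ 2)
   = h^-1 * (2 * Num.max 0 t * h - (Num.max 0 (h + t) ^+ 2 - Num.max 0 t ^+ 2)).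
  by field.
rewrite normrM normrV ?unitfE //.
apply: le_trans hle.
rewrite ler_pdivrMl ?normr_gt0 //.
apply: le_trans (sqp_key t h) _.
by rewrite -expr2 -normrX ger0_norm // sqr_ge0.
Unshelve. all: by end_near.
Qed.

Variable n : nat.
Implicit Types f : 'rV[R]_n -> R.

Lemma is_derive_sqp f (x0 v : 'rV[R]_n) : differentiable f x0 ->
  is_derive x0 v (fun y => Num.max 0 (f y) ^+ 2) (2 * Num.max 0 (f x0) * 'D_v f x0).
Proof.
move=> df.
pose q := fun s : R => Num.max 0 s ^+ 2.
have dq : forall s, differentiable q s.
  move=> s; apply/derivable1_diffP; exact: (@ex_derive _ _ _ _ _ _ _ (sqp_derive s)).
have dcomp : differentiable (q \o f) x0 by apply: differentiable_comp.
apply: DeriveDef; first exact: diff_derivable.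
rewrite -/(q \o f) deriveE // diff_comp //= deriv1E; last first.
  exact: (@ex_derive _ _ _ _ _ _ _ (sqp_derive _)).
rewrite derive1E (@derive_val _ _ _ _ _ _ _ (sqp_derive _)) -deriveE //.
by rewrite -[_ *: _]/(_ * _) mulrC.
Qed.

Lemma is_derive_bigsum (I : Type) (s : seq I) (P : pred I) (F : I -> 'rV[R]_n -> R)
  (dF : I -> R) (x0 v : 'rV[R]_n) :
  (forall i, P i -> is_derive x0 v (F i) (dF i)) ->
  is_derive x0 v (fun y => \sum_(i <- s | P i) F i y) (\sum_(i <- s | P i) dF i).
Proof.
move=> H; elim: s => [|a s IH].
  have -> : (fun y => \sum_(i <- [::] | P i) F i y) = cst 0.
    by apply/funext => y; rewrite big_nil.
  rewrite big_nil; exact: is_derive_cst.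
case: (boolP (P a)) => Pa.
  have -> : (fun y => \sum_(i <- a :: s | P i) F i y) = F a + (fun y => \sum_(i <- s | P i) F i y).
    by apply/funext => y; rewrite big_cons Pa.
  rewrite big_cons Pa; apply: is_deriveD => //; exact: H.
have -> : (fun y => \sum_(i <- a :: s | P i) F i y) = (fun y => \sum_(i <- s | P i) F i y).
  by apply/funext => y; rewrite big_cons (negbTE Pa).
by rewrite big_cons (negbTE Pa).
Qed.

Lemma partial_La (N m : nat) (theta : 'I_N -> 'rV[R]_n -> R)
  (g : 'I_m -> 'rV[R]_n -> R) (gblk : 'I_m -> 'I_N) (nu : 'I_N)
  (x0 : 'rV[R]_n) (uu : 'I_m -> R) (r : R) (j : 'I_n) :
  differentiable (theta nu) x0 -> (forall i, differentiable (g i) x0) ->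
  partial (fun y => La theta g gblk nu y uu r) j x0 =
  partial (theta nu) j x0 +
  \sum_(i | gblk i == nu) partial (g i) j x0 * (r * Num.max 0 (g i x0 + uu i / r)).
Proof.
move=> dth dg.
have Hg : forall i, is_derive x0 (@evec R n j) (fun y => Num.max 0 (g i y + uu i / r) ^+ 2)
    (2 * Num.max 0 (g i x0 + uu i / r) * partial (g i) j x0).
  move=> i.
  have dF : differentiable (fun y => g i y + uu i / r) x0.
    by apply: differentiableD => //; exact: differentiable_cst.
  have H := @is_derive_sqp _ _ (@evec R n j) dF; apply: (is_derive_eq H).
  rewrite /partial.
  congr (_ * _).
  have -> : (fun y => g i y + uu i / r) = g i + cst (uu i / r) by [].
  rewrite deriveD; last exact: derivable_cst.
    by rewrite derive_cst addr0.
  exact: diff_derivable.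
have HS := @is_derive_bigsum _ (index_enum 'I_m) (fun i => gblk i == nu) _ _ _ _ (fun i _ => Hg i).
have Hth : is_derive x0 (@evec R n j) (theta nu) (partial (theta nu) j x0).
  exact/derivableP/diff_derivable.
have HZ := is_deriveZ (r / 2) HS.
have HL := is_deriveD Hth HZ.
rewrite /partial.
have -> : (fun y => La theta g gblk nu y uu r) =
   theta nu + (r / 2) \*: (fun y => \sum_(i | gblk i == nu) Num.max 0 (g i y + uu i / r) ^+ 2).
  by apply/funext => y.
rewrite (@derive_val _ _ _ _ _ _ _ HL) /=; congr (_ + _).
rewrite -[_ *: _]/(_ * _) mulr_sumr; apply: eq_bigr => i _.
by rewrite /partial; field.
Qed.

End Der.

Section Pre.
Variable R : realType.

Lemma squeeze0 (u e : nat -> R) :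
  (\forall k \near \oo, `|u k| <= e k) -> e @ \oo --> 0 -> u @ \oo --> 0.
Proof.
move=> Hue He; apply/cvgrPdist_le => eps eps0.
move/cvgrPdist_le : He => /(_ eps eps0) He.
near=> k.
have h1 : `|u k| <= e k by near: k.
have h2 : `|0 - e k| <= eps by near: k.
rewrite sub0r normrN; apply: le_trans h1 _.
apply: le_trans (ler_norm _) _; by rewrite -normrN -sub0r.
Unshelve. all: by end_near.
Qed.

Variables (n N : nat) (blk : 'I_n -> 'I_N) (nu : 'I_N) (T : finType)
  (c : T -> 'rV[R]_n -> R) (cb : T -> 'I_N) (dth : 'I_n -> 'rV[R]_n -> R)
  (Dc : T -> 'I_n -> 'rV[R]_n -> R) (xbar : 'rV[R]_n).

Lemma precore (y : nat -> 'rV[R]_n) (w : nat -> T -> R) :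
 (forall j, {for xbar, continuous (dth j)}) ->
 (forall i j, {for xbar, continuous (Dc i j)}) ->
 y @ \oo --> xbar ->
 (forall i, cb i = nu -> c i xbar <= 0) ->
 (forall i, cb i = nu -> exists d : nat -> R, d @ \oo --> 0 /\ forall k, - d k <= w k i) ->
 (forall i, cb i = nu -> c i xbar < 0 -> (fun k => w k i) @ \oo --> 0) ->
 (forall j, blk j = nu ->
    (fun k => dth j (y k) + \sum_(i | cb i == nu) Dc i j (y k) * w k i) @ \oo --> 0) ->
 (forall S : {set T}, (forall i, i \in S -> cb i = nu /\ c i xbar = 0) ->
    pos_lin_dep blk nu S (fun i j => Dc i j xbar) ->
    \forall z \near xbar, lin_dep blk nu S (fun i j => Dc i j z)) ->
 exists lam : T -> R,
   (forall j, blk j = nu -> dth j xbar + \sum_(i | cb i == nu) Dc i j xbar * lam i = 0) /\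
   (forall i, cb i = nu -> Num.min (- c i xbar) (lam i) = 0).
Proof.
move=> cth cD yx feas wlow winact res CPLD.
pose act i := (cb i == nu) && (c i xbar == 0).
pose w' k i := if act i then Num.max 0 (w k i) else 0.
have dif : forall i, cb i = nu -> (fun k => w' k i - w k i) @ \oo --> 0.
  move=> i ci; rewrite /w' /act ci eqxx /=.
  case: (eqVneq (c i xbar) 0) => ce /=.
    have [d [d0 dw]] := wlow i ci.
    have d0' : (fun k => `|d k|) @ \oo --> 0.
      by rewrite -(@normr0 _ R); apply: cvg_norm.
    apply: (@squeeze0 _ (fun k => `|d k|) _ d0'); apply: nearW => k.
    have := dw k; case: (leP 0 (w k i)) => wk.
      by rewrite subrr normr0.
    rewrite add0r normrN ltr0_norm // => H; apply: le_trans (ler_norm _); lra.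
  have cneg : c i xbar < 0 by rewrite lt_neqAle ce feas.
  under eq_fun do rewrite sub0r.
  rewrite -oppr0; apply: cvgN; exact: winact.
apply: (@core R n N blk nu T c cb dth Dc xbar y w') => //.
- by move=> k i; rewrite /w'; case: ifP => // _; by rewrite le_max lexx.
- move=> k i Hn; rewrite /w' /act; case: ifP => // /andP[/eqP h1 /eqP h2]; by case: Hn.
move=> j bj.
have H2 : (fun k => \sum_(i | cb i == nu) Dc i j (y k) * (w' k i - w k i)) @ \oo --> 0.
  have := @cvg_bigsum R _ (index_enum T) (fun i => cb i == nu)
     (fun i k => Dc i j (y k) * (w' k i - w k i)) (fun i => Dc i j xbar * 0) _.
  rewrite big1; last by move=> i _; rewrite mulr0.
  apply => i /eqP ci; apply: cvgM; last exact: dif.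
  exact: (continuous_cvg _ (cD i j) yx).
have H3 := cvgD (res j bj) H2.
rewrite addr0 in H3.
have -> : (fun k => dth j (y k) + \sum_i w' k i * Dc i j (y k)) =
  (fun k => (dth j (y k) + \sum_(i | cb i == nu) Dc i j (y k) * w k i) +
  \sum_(i | cb i == nu) Dc i j (y k) * (w' k i - w k i)).
  apply/funext => k /=; rewrite -addrA; congr (_ + _).
  rewrite -big_split /= [LHS](bigID (fun i => cb i == nu)) /=.
  rewrite [X in _ + X]big1 ?addr0; last first.
    move=> i /negbTE ci; by rewrite /w' /act ci /= mul0r.
  by apply: eq_bigr => i _; ring.
exact: H3.
Qed.
End Pre.

Section EM.
Variable R : realType.

Lemma bnorm_ge (I : finType) (P : pred I) (v : I -> R) j : P j -> `|v j| <= bnorm P v.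
Proof.
move=> Pj; rewrite /bnorm -sqrtr_sqr ler_sqrt; last first.
  by apply: sumr_ge0 => i _; exact: sqr_ge0.
rewrite (bigD1 j) //= lerDl; apply: sumr_ge0 => i _; exact: sqr_ge0.
Qed.

Lemma compl_lim (a b d : nat -> R) (a0 : R) :
  a @ \oo --> a0 -> d @ \oo --> 0 ->
  (forall k, `|Num.min (a k) (b k)| <= d k) ->
  [/\ 0 <= a0, (forall k, - d k <= b k) & (0 < a0 -> b @ \oo --> 0)].
Proof.
move=> Ha Hd Hm.
have low : forall k, - d k <= a k /\ - d k <= b k.
  move=> k; have := Hm k; rewrite ler_norml => /andP[H _].
  by move: H; rewrite le_min => /andP[].
split.
- have Had : (fun k => a k + d k) @ \oo --> a0 + 0 by apply: cvgD.
  rewrite addr0 in Had; apply: cvg_ge0 Had => k.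
  have [h1 _] := low k; lra.
- by move=> k; case: (low k).
move=> a00.
have d0' : (fun k => `|d k|) @ \oo --> 0.
  by rewrite -(@normr0 _ R); apply: cvg_norm.
apply: (@squeeze0 R b (fun k => `|d k|) _ d0').
have E1 := cvg_near_ge Ha (_ : a0 / 2 < a0).
have E2 := cvg_near_le d0' (_ : 0 < a0 / 2).
near=> k.
have e1 : a0 / 2 < a k by near: k; apply: E1; lra.
have e2 : `|d k| < a0 / 2 by near: k; apply: E2; lra.
have hm := Hm k.
have hd := ler_norm (d k).
move: hm; case: (leP (a k) (b k)) => ab hm.
  have := ler_norm (a k); lra.
by apply: le_trans hm _.
Unshelve. all: by end_near.
Qed.

Variables (n N : nat) (blk : 'I_n -> 'I_N) (nu : 'I_N) (T : finType)
  (c : T -> 'rV[R]_n -> R) (cb : T -> 'I_N) (dth : 'I_n -> 'rV[R]_n -> R)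
  (Dc : T -> 'I_n -> 'rV[R]_n -> R) (xbar : 'rV[R]_n).

Lemma emfcq_feas (y : nat -> 'rV[R]_n) (w : nat -> T -> R) (i0 : T) (d : 'I_n -> R) :
 (forall j, {for xbar, continuous (dth j)}) ->
 (forall i j, {for xbar, continuous (Dc i j)}) ->
 y @ \oo --> xbar ->
 (forall i, cb i = nu -> exists dl : nat -> R, dl @ \oo --> 0 /\ forall k, - dl k <= w k i) ->
 (forall i, cb i = nu -> c i xbar < 0 -> (fun k => w k i) @ \oo --> 0) ->
 (forall j, blk j = nu ->
    (fun k => dth j (y k) + \sum_(i | cb i == nu) Dc i j (y k) * w k i) @ \oo --> 0) ->
 (forall i, cb i = nu -> 0 <= c i xbar -> \sum_(j | blk j == nu) Dc i j xbar * d j < 0) ->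
 cb i0 = nu -> 0 < c i0 xbar ->
 (forall M, \forall k \near \oo, M <= w k i0) -> False.
Proof.
move=> cth cD yx wlow winact res Hd ci0 c0 winf.
pose sl k i := \sum_(j | blk j == nu) Dc i j (y k) * d j.
pose slim i := \sum_(j | blk j == nu) Dc i j xbar * d j.
have slc : forall i, (fun k => sl k i) @ \oo --> slim i.
  move=> i; apply: (@cvg_bigsum R _ (index_enum 'I_n) (fun j => blk j == nu)
     (fun j k => Dc i j (y k) * d j) (fun j => Dc i j xbar * d j)) => j _.
  apply: cvgM; last exact: cvg_cst.
  exact: (continuous_cvg _ (cD i j) yx).
pose T0 k := \sum_(j | blk j == nu) dth j (y k) * d j.
pose T0l := \sum_(j | blk j == nu) dth j xbar * d j.
have T0c : T0 @ \oo --> T0l.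
  apply: (@cvg_bigsum R _ (index_enum 'I_n) (fun j => blk j == nu)
     (fun j k => dth j (y k) * d j) (fun j => dth j xbar * d j)) => j _.
  apply: cvgM; last exact: cvg_cst.
  exact: (continuous_cvg _ (cth j) yx).
pose LHS k := \sum_(j | blk j == nu)
   (dth j (y k) + \sum_(i | cb i == nu) Dc i j (y k) * w k i) * d j.
have LHSc : LHS @ \oo --> 0.
  have := @cvg_bigsum R _ (index_enum 'I_n) (fun j => blk j == nu)
     (fun j k => (dth j (y k) + \sum_(i | cb i == nu) Dc i j (y k) * w k i) * d j)
     (fun j => 0 * d j).
  rewrite big1; last by move=> j _; rewrite mul0r.
  apply => j /eqP bj; apply: cvgM; last exact: cvg_cst.
  exact: res.
have LHSE : forall k, LHS k = T0 k + \sum_(i | cb i == nu) w k i * sl k i.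
  move=> k; rewrite /LHS /T0 /sl.
  under eq_bigr do rewrite mulrDl.
  rewrite big_split /=; congr (_ + _).
  under eq_bigr do rewrite mulr_suml.
  rewrite exchange_big /=; apply: eq_bigr => i _.
  rewrite mulr_sumr; apply: eq_bigr => j _; ring.
have E3 : \forall k \near \oo, forall i, cb i == nu -> w k i * sl k i <= 1.
  apply: filter_forall => i.
  case: (boolP (cb i == nu)) => [/eqP ci|_]; last by apply: nearW.
  case: (ltP (c i xbar) 0) => cx.
    have H : (fun k => w k i * sl k i) @ \oo --> 0 * slim i.
      by apply: cvgM; [exact: winact | exact: slc].
    rewrite mul0r in H.
    have := cvg_near_le H (ltr01 : (0:R) < 1).
    by apply: filterS => k Hk _; apply: ltW.
  have [dl [dl0 dlw]] := wlow i ci.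
  have sneg := Hd i ci cx.
  have H : (fun k => - dl k * sl k i) @ \oo --> - 0 * slim i.
    by apply: cvgM; [apply: cvgN | exact: slc].
  rewrite oppr0 mul0r in H.
  have E1 := cvg_near_le H (ltr01 : (0:R) < 1).
  have E2 := cvg_near_le (slc i) sneg.
  near=> k => _.
  have e1 : - dl k * sl k i < 1 by near: k.
  have e2 : sl k i < 0 by near: k.
  have := dlw k; nra.
have sneg0 : slim i0 < 0 by apply: Hd => //; exact: ltW.
pose Kc := \sum_(i : T) (1 : R).
have Kc0 : 0 <= Kc by apply: sumr_ge0 => i _; exact: ler01.
pose M := 2 * (`|T0l| + 3 + Kc) / (- slim i0).
have M0 : 0 <= M.
  rewrite /M divr_ge0 // ?mulr_ge0 //; last by lra.
  have := normr_ge0 T0l; lra.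
have E1 := cvg_near_ge LHSc (_ : -1 < 0).
have E2 := cvg_near_le T0c (_ : T0l < T0l + 1).
have E4 := cvg_near_le (slc i0) (_ : slim i0 < slim i0 / 2).
have E5 := winf M.
suff : \forall k \near \oo, False by case=> K _ HK; exact: (HK K (leqnn K)).
near=> k.
have e1 : -1 < LHS k by near: k; apply: E1; lra.
have e2 : T0 k < T0l + 1 by near: k; apply: E2; lra.
have e3 : forall i, cb i == nu -> w k i * sl k i <= 1 by near: k.
have e4 : sl k i0 < slim i0 / 2 by near: k; apply: E4; lra.
have e5 : M <= w k i0 by near: k.
move: e1; rewrite LHSE (bigD1 i0) /=; last by apply/eqP.
have rest : \sum_(i | (cb i == nu) && (i != i0)) w k i * sl k i <= Kc.
  rewrite /Kc big_mkcond /=; apply: ler_sum => i _.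
  case: ifP => [/andP[Hi _]|_]; [exact: e3 | exact: ler01].
have hw : w k i0 * sl k i0 <= M * (slim i0 / 2).
  have h1 : w k i0 * sl k i0 <= M * sl k i0 by nra.
  have h2 : M * sl k i0 <= M * (slim i0 / 2) by nra.
  exact: le_trans h1 h2.
have hM : M * (slim i0 / 2) = - (`|T0l| + 3 + Kc).
  rewrite /M; field; by rewrite ?oppr_eq0 lt_eqF.
have := ler_norm T0l; lra.
Unshelve. all: by end_near.
Qed.
End EM.

Theorem theorem4p6 (R : realType) (N n m p : nat)
  (blk : 'I_n -> 'I_N) (gblk : 'I_m -> 'I_N) (hblk : 'I_p -> 'I_N)
  (theta : 'I_N -> 'rV[R]_n -> R)
  (g : 'I_m -> 'rV[R]_n -> R) (h : 'I_p -> 'rV[R]_n -> R)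
  (Htheta : forall nu, C1 (theta nu))
  (Hg : forall i, C1 (g i)) (Hh : forall i, C1 (h i))
  (* algorithm parameters *)
  (umax : 'I_m -> R) (tau gamma : 'I_N -> R)
  (Humax : forall i, 0 <= umax i)
  (Htau : forall nu, 0 < tau nu < 1)
  (Hgamma : forall nu, 1 < gamma nu)
  (* iterates *)
  (x : nat -> 'rV[R]_n) (lam : nat -> 'I_m -> R) (mu : nat -> 'I_p -> R)
  (u : nat -> 'I_m -> R) (rho : nat -> 'I_N -> R)
  (eps eps' : nat -> R)
  (Hrho0 : forall nu, 0 < rho 0%N nu)
  (Heps_nonneg : forall k, 0 <= eps k)
  (Heps_decr : forall k, eps k.+1 <= eps k)
  (Heps_lim : eps @ \oo --> 0)
  (Heps'_lim : eps' @ \oo --> 0)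
  (* step (1): inexactness assumption *)
  (Hstep1 : forall k nu,
     bnorm (fun j => blk j == nu)
       (fun j => partial (fun y => La theta g gblk nu y (u k) (rho k nu)) j (x k.+1)
                 + \sum_(i | hblk i == nu) partial (h i) j (x k.+1) * mu k.+1 i)
       <= eps k /\
     bnorm (fun i => hblk i == nu)
       (fun i => Num.min (- h i (x k.+1)) (mu k.+1 i)) <= eps' k)
  (* step (2) *)
  (Hstep2 : forall k i,
     lam k.+1 i = Num.max 0 (u k i + rho k (gblk i) * g i (x k.+1)))
  (* step (3) *)
  (Hstep3 : forall k nu,
     rho k.+1 nu =
       if bnorm (fun i => gblk i == nu)
                (fun i => Num.min (- g i (x k.+1)) (lam k.+1 i))
          <= tau nu * bnorm (fun i => gblk i == nu)
                (fun i => Num.min (- g i (x k)) (lam k i))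
       then rho k nu else gamma nu * rho k nu)
  (* step (4) *)
  (Hstep4 : forall k i, u k.+1 i = Num.min (lam k.+1 i) (umax i))
  (* limit point *)
  (xbar : 'rV[R]_n)
  (Hlim : exists phi : nat -> nat, (forall k, (phi k < phi k.+1)%N) /\
            (fun k => x (phi k)) @ \oo --> xbar)
  (HCQ : (gnep_feasible g h xbar /\ gnep_cpld blk g gblk h hblk xbar)
         \/ gnep_emfcq blk g gblk h hblk xbar) :
  gnep_kkt blk theta g gblk h hblk xbar.
Proof.
move=> nu.
have rho_pos : forall k nu', 0 < rho k nu'.
  elim=> [|k IH] nu'; first exact: Hrho0.
  rewrite Hstep3; case: ifP => _; first exact: IH.
  apply: mulr_gt0 (IH nu'); have := Hgamma nu'; lra.
have rho_mono : forall k, rho k nu <= rho k.+1 nu.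
  move=> k; rewrite [rho k.+1 nu]Hstep3; case: ifP => _; first exact: lexx.
  have := rho_pos k nu; have := Hgamma nu; nra.
have rho_monoD : forall K d, rho K nu <= rho (K + d)%N nu.
  move=> K; elim=> [|d IH]; first by rewrite addn0.
  rewrite addnS; exact: le_trans IH (rho_mono _).
have lam_ge0 : forall k i, 0 <= lam k.+1 i by move=> k i; rewrite Hstep2 le_max lexx.
pose Bu i := `|u 0%N i| + umax i.
have u_bnd : forall k i, `|u k i| <= Bu i.
  case=> [|k] i; first by rewrite /Bu lerDl Humax.
  rewrite Hstep4 /Bu.
  have h0 : 0 <= Num.min (lam k.+1 i) (umax i) by rewrite le_min lam_ge0 Humax.
  have h1 : Num.min (lam k.+1 i) (umax i) <= umax i by rewrite ge_min lexx orbT.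
  rewrite ger0_norm //; have := normr_ge0 (u 0%N i); lra.
case: Hlim => phi [phiinc phicvg].
have phi_ge : forall k, (k <= phi k)%N.
  elim=> // k IH; exact: leq_ltn_trans IH (phiinc k).
pose psi k := (phi k.+1).-1.
have psiS : forall k, (psi k).+1 = phi k.+1.
  by move=> k; rewrite prednK // (leq_trans _ (phi_ge _)).
have psi_ge : forall k, (k <= psi k)%N by move=> k; rewrite -ltnS psiS phi_ge.
pose y k := x (phi k.+1).
have yx : y @ \oo --> xbar.
  exact: (@cvg_sub _ (fun k => x (phi k)) xbar S (fun k => leqnSn k) phicvg).
have cth : forall j, {for xbar, continuous (partial (theta nu) j)}.
  by move=> j; exact: (Htheta nu).2 j xbar.
have cD : forall i j, {for xbar, continuous (partial (cfun g h i) j)}.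
  by case=> i j; [exact: (Hg i).2 j xbar | exact: (Hh i).2 j xbar].
have gc : forall i, (fun k => g i (y k)) @ \oo --> g i xbar.
  move=> i; apply: (continuous_cvg _ _ yx).
  exact: differentiable_continuous ((Hg i).1 xbar).
have hc : forall i, (fun k => h i (y k)) @ \oo --> h i xbar.
  move=> i; apply: (continuous_cvg _ _ yx).
  exact: differentiable_continuous ((Hh i).1 xbar).
pose w k (i : 'I_m + 'I_p) := match i with inl i => lam (phi k.+1) i | inr i => mu (phi k.+1) i end.
have resb : forall k j, blk j = nu ->
   `|partial (theta nu) j (y k) + \sum_(i | cblk gblk hblk i == nu) partial (cfun g h i) j (y k) * w k i|
   <= eps (psi k).
  move=> k j bj.
  have [H1 _] := Hstep1 (psi k) nu.
  rewrite psiS in H1.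
  move: H1; set v := (X in bnorm _ X <= _) => H1.
  have Bj : `|v j| <= bnorm (fun j => blk j == nu) v by apply: bnorm_ge; rewrite /= bj.
  suff -> : partial (theta nu) j (y k) + \sum_(i | cblk gblk hblk i == nu) partial (cfun g h i) j (y k) * w k i = v j.
    exact: le_trans Bj H1.
  rewrite /v partial_La; last 2 first.
  - exact: (Htheta nu).1.
  - by move=> i; exact: (Hg i).1.
  rewrite big_sumType /= addrA; congr (_ + _ + _).
  apply: eq_bigr => i /eqP gi; congr (_ * _).
  rewrite -psiS Hstep2 gi maxr_pMr; last exact: ltW.
  rewrite mulr0; congr (Num.max 0 _).
  have := rho_pos (psi k) nu => rp.
  by field; rewrite gt_eqF.
have res : forall j, blk j = nu ->
   (fun k => partial (theta nu) j (y k) + \sum_(i | cblk gblk hblk i == nu)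
      partial (cfun g h i) j (y k) * w k i) @ \oo --> 0.
  move=> j bj; apply: (@squeeze0 R _ (fun k => eps (psi k))).
    by apply: nearW => k; exact: resb.
  exact: (@cvg_sub _ eps 0 psi psi_ge Heps_lim).
have hfacts : forall i, hblk i = nu -> [/\ 0 <= - h i xbar,
    (forall k, - eps' (psi k) <= mu (phi k.+1) i) &
    (0 < - h i xbar -> (fun k => mu (phi k.+1) i) @ \oo --> 0)].
  move=> i hi.
  apply: (@compl_lim R (fun k => - h i (y k)) (fun k => mu (phi k.+1) i) (fun k => eps' (psi k))).
  - by apply: cvgN; exact: hc.
  - exact: (@cvg_sub _ eps' 0 psi psi_ge Heps'_lim).
  - move=> k; have [_ H2] := Hstep1 (psi k) nu; rewrite psiS in H2.
    apply: le_trans H2.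
    apply: (@bnorm_ge R _ (fun i => hblk i == nu) (fun i => Num.min (- h i (x (phi k.+1))) (mu (phi k.+1) i))).
    by rewrite /= hi.
have yphi : forall k, y k = x (phi k.+1) by [].
have tau0 : 0 < tau nu by case/andP: (Htau nu).
have tau1 : tau nu < 1 by case/andP: (Htau nu).
pose V k := bnorm (fun i => gblk i == nu) (fun i => Num.min (- g i (x k)) (lam k i)).
have V0 : forall k, 0 <= V k by move=> k; exact: sqrtr_ge0.
have Vb : forall k i, gblk i = nu -> `|Num.min (- g i (x k)) (lam k i)| <= V k.
  move=> k i gi; apply: (@bnorm_ge R _ (fun i => gblk i == nu) (fun i => Num.min (- g i (x k)) (lam k i))).
  by rewrite /= gi.
have gfacts : (forall i, gblk i = nu -> g i xbar <= 0) /\ (forall i, gblk i = nu -> g i xbar < 0 -> (fun k => lam (phi k.+1) i) @ \oo --> 0).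
  have [[K HK]|NEC] := pselect (exists K, forall k, (K <= k)%N -> V k.+1 <= tau nu * V k).
    pose C := V K / tau nu ^+ K.
    have Vgeo : forall t, V (K + t)%N <= C * tau nu ^+ (K + t).
      elim=> [|t IH].
        by rewrite addn0 /C divfK ?lexx // expf_neq0 // gt_eqF.
      rewrite addnS exprS; apply: le_trans (HK _ (leq_addr _ _)) _.
      have := V0 (K + t)%N; nra.
    have Vlim : V @ \oo --> 0.
      apply: (@squeeze0 R V (fun k => C * tau nu ^+ k)); last first.
        by apply: (cvg_geometric C); rewrite ger0_norm // ltW.
      near=> k.
      have Kk : (K <= k)%N by near: k; exists K.
      rewrite ger0_norm //; have := Vgeo (k - K)%N; by rewrite subnKC.
    have VS : (fun k => V (phi k.+1)) @ \oo --> 0.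
      exact: (@cvg_sub _ V 0 (fun k => phi k.+1) (fun k => leq_trans (leqnSn k) (phi_ge _)) Vlim).
    have CL : forall i, gblk i = nu -> [/\ 0 <= - g i xbar,
        (forall k, - V (phi k.+1) <= lam (phi k.+1) i) &
        (0 < - g i xbar -> (fun k => lam (phi k.+1) i) @ \oo --> 0)].
      move=> i gi.
      apply: (@compl_lim R (fun k => - g i (y k)) (fun k => lam (phi k.+1) i) (fun k => V (phi k.+1))).
      - by apply: cvgN; exact: gc.
      - exact: VS.
      - by move=> k; exact: Vb.
    split.
      by move=> i gi; have [H _ _] := CL i gi; rewrite -oppr_ge0.
    by move=> i gi gn; have [_ _ H] := CL i gi; apply: H; rewrite oppr_gt0.
  have NEC' : forall K, exists k, (K <= k)%N /\ ~ (V k.+1 <= tau nu * V k).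
    move=> K; apply: contrapT => H; apply: NEC; exists K => k Kk.
    apply: contrapT => H2; apply: H; by exists k.
  have pow : forall t, exists K, rho 0%N nu * gamma nu ^+ t <= rho K nu.
    elim=> [|t [K HK]]; first by exists 0%N; rewrite expr0 mulr1.
    have [k [Kk Hk]] := NEC' K.
    exists k.+1; rewrite Hstep3 ifN; last by apply/negP.
    have := rho_monoD K (k - K)%N; rewrite subnKC // => HKk.
    rewrite exprS; have := Hgamma nu; have := rho_pos 0%N nu; nra.
  have bern : forall t, 1 + t%:R * (gamma nu - 1) <= gamma nu ^+ t.
    elim=> [|t IH]; first by rewrite mul0r addr0 expr0.
    rewrite exprS -[t.+1]addn1 natrD mulr1n.
    have hg := Hgamma nu.
    have h1 : gamma nu * (1 + t%:R * (gamma nu - 1)) <= gamma nu * gamma nu ^+ t.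
      by rewrite ler_pM2l //; lra.
    have h2 : 0 <= t%:R * ((gamma nu - 1) * (gamma nu - 1)).
      by apply: mulr_ge0; [exact: ler0n | apply: mulr_ge0; lra].
    nra.
  have rho_inf : forall M, exists K, forall k, (K <= k)%N -> M <= rho k nu.
    move=> M.
    have g1 : 0 < gamma nu - 1 by have := Hgamma nu; lra.
    have r0 := rho_pos 0%N nu.
    pose q := `|M| / (rho 0%N nu * (gamma nu - 1)).
    have q0 : 0 <= q by rewrite divr_ge0 // mulr_ge0 // ltW.
    have qt := archi_boundP q0.
    set t := Num.Def.archi_bound q in qt.
    have [K HK] := pow t.
    exists K => k Kk.
    have := rho_monoD K (k - K)%N; rewrite subnKC // => HKk.
    have hb := bern t.
    have hq : q * (rho 0%N nu * (gamma nu - 1)) = `|M|.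
      by rewrite /q divfK // mulf_neq0 // gt_eqF.
    have hM := ler_norm M.
    have h1 : q * (rho 0%N nu * (gamma nu - 1)) <= t%:R * (rho 0%N nu * (gamma nu - 1)).
      by rewrite ler_pM2r ?mulr_gt0 // ltW.
    have h2 : rho 0%N nu * (1 + t%:R * (gamma nu - 1)) <= rho 0%N nu * gamma nu ^+ t.
      by rewrite ler_pM2l.
    nra.
  have rho_near : forall M, \forall k \near \oo, M <= rho (psi k) nu.
    move=> M; have [K HK] := rho_inf M; exists K => // k /= Kk.
    apply: HK; exact: leq_trans Kk (psi_ge k).
  have G2 : forall i, gblk i = nu -> g i xbar < 0 -> (fun k => lam (phi k.+1) i) @ \oo --> 0.
    move=> i gi gn.
    pose M := (Bu i + 1) * 2 / (- g i xbar).
    have E1 := rho_near M.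
    have E2 := cvg_near_le (gc i) (_ : g i xbar < g i xbar / 2).
    apply: (@squeeze0 R _ (fun _ => 0)); last exact: cvg_cst.
    near=> k.
    have e1 : M <= rho (psi k) nu by near: k.
    have e2 : g i (y k) < g i xbar / 2 by near: k; apply: E2; lra.
    have hu := ler_norm (u (psi k) i).
    have hu2 := u_bnd (psi k) i.
    have hr := rho_pos (psi k) nu.
    have hM : M * (g i xbar / 2) = - (Bu i + 1).
      by rewrite /M; field; rewrite ?oppr_eq0 lt_eqF.
    rewrite -psiS Hstep2 gi psiS -(yphi k) max0r_neg ?normr0 //.
    have h1 : rho (psi k) nu * g i (y k) <= rho (psi k) nu * (g i xbar / 2).
      by rewrite ler_pM2l // ltW.
    have h2 : rho (psi k) nu * (g i xbar / 2) <= M * (g i xbar / 2).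
      by rewrite ler_wnM2r //; lra.
    lra.
  split; last exact: G2.
  case: HCQ => [[Hfeas _]|Hem]; first by move=> i _; exact: Hfeas.1 i.
  move=> i0 gi0; rewrite leNgt; apply/negP => gpos.
  have [d Hd] := Hem nu.
  have wlow : forall i, cblk gblk hblk i = nu -> exists dl : nat -> R,
      dl @ \oo --> 0 /\ forall k, - dl k <= w k i.
    case=> i /= ci.
      exists (fun _ => 0); split; first exact: cvg_cst.
      by move=> k; rewrite oppr0 /= -psiS; exact: lam_ge0.
    exists (fun k => eps' (psi k)); split.
      exact: (@cvg_sub _ eps' 0 psi psi_ge Heps'_lim).
    by have [_ H _] := hfacts i ci.
  have winact : forall i, cblk gblk hblk i = nu -> cfun g h i xbar < 0 ->
      (fun k => w k i) @ \oo --> 0.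
    case=> i /= ci cn; first exact: G2.
    have [_ _ H] := hfacts i ci; apply: H; by rewrite oppr_gt0.
  have winf : forall M, \forall k \near \oo, M <= w k (inl i0).
    move=> M.
    pose M' := (M + Bu i0) / (g i0 xbar / 2).
    have E1 := rho_near M'.
    have E2 := cvg_near_ge (gc i0) (_ : g i0 xbar / 2 < g i0 xbar).
    near=> k.
    have e1 : M' <= rho (psi k) nu by near: k.
    have e2 : g i0 xbar / 2 < g i0 (y k) by near: k; apply: E2; lra.
    have hu := ler_norm (- u (psi k) i0).
    rewrite normrN in hu.
    have hu2 := u_bnd (psi k) i0.
    have hr := rho_pos (psi k) nu.
    have hM : M' * (g i0 xbar / 2) = M + Bu i0.
      by rewrite /M'; field; rewrite gt_eqF.
    rewrite /w -psiS Hstep2 gi0 psiS -(yphi k) le_max; apply/orP; right.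
    have h1 : rho (psi k) nu * (g i0 xbar / 2) <= rho (psi k) nu * g i0 (y k).
      by rewrite ler_pM2l // ltW.
    have h2 : M' * (g i0 xbar / 2) <= rho (psi k) nu * (g i0 xbar / 2).
      by rewrite ler_pM2r //; lra.
    lra.
  exact: (@emfcq_feas R n N blk nu _ (cfun g h) (cblk gblk hblk)
     (fun j z => partial (theta nu) j z) (fun i j z => partial (cfun g h i) j z)
     xbar y w (inl i0) d cth cD yx wlow winact res Hd gi0 gpos winf).
case: gfacts => gfeas G2.
have feas : forall i, cblk gblk hblk i = nu -> cfun g h i xbar <= 0.
  case=> i /= ci; first exact: gfeas.
  by have [H _ _] := hfacts i ci; rewrite -oppr_ge0.
have wlow : forall i, cblk gblk hblk i = nu -> exists dl : nat -> R,
    dl @ \oo --> 0 /\ forall k, - dl k <= w k i.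
  case=> i /= ci.
    exists (fun _ => 0); split; first exact: cvg_cst.
    by move=> k; rewrite oppr0 /= -psiS; exact: lam_ge0.
  exists (fun k => eps' (psi k)); split.
    exact: (@cvg_sub _ eps' 0 psi psi_ge Heps'_lim).
  by have [_ H _] := hfacts i ci.
have winact : forall i, cblk gblk hblk i = nu -> cfun g h i xbar < 0 ->
    (fun k => w k i) @ \oo --> 0.
  case=> i /= ci cn; first exact: G2.
  have [_ _ H] := hfacts i ci; apply: H; by rewrite oppr_gt0.
have CP : forall S : {set ('I_m + 'I_p)%type},
    (forall i, i \in S -> cblk gblk hblk i = nu /\ cfun g h i xbar = 0) ->
    pos_lin_dep blk nu S (fun i j => partial (cfun g h i) j xbar) ->
    \forall z \near xbar, lin_dep blk nu S (fun i j => partial (cfun g h i) j z).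
  case: HCQ => [[_ Hcpld]|Hem].
    by move=> S HS PLD; exact: Hcpld nu S HS PLD.
  move=> S HS [a [a0 [[i1 i1S a1] Hsum]]]; exfalso.
  have [d Hd] := Hem nu.
  pose sl i := \sum_(j | blk j == nu) partial (cfun g h i) j xbar * d j.
  have sneg : forall i, i \in S -> sl i < 0.
    move=> i iS; have [ci cx] := HS i iS; apply: Hd => //; by rewrite cx.
  have E : \sum_(i in S) a i * sl i = 0.
    rewrite /sl; under eq_bigr do rewrite mulr_sumr.
    rewrite exchange_big /= big1 // => j /eqP bj.
    apply: (@eq_trans _ _ ((\sum_(i in S) a i * partial (cfun g h i) j xbar) * d j)); last first.
      by rewrite (Hsum j bj) mul0r.
    rewrite mulr_suml; apply: eq_bigr => i _; by rewrite mulrA.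
  move: E; rewrite (bigD1 i1) //=.
  have h1 : a i1 * sl i1 < 0.
    by rewrite pmulr_rlt0 ?sneg // lt_neqAle eq_sym a1 a0.
  have h2 : \sum_(i in S | i != i1) a i * sl i <= 0.
    apply: sumr_le0 => i /andP[iS _].
    have := a0 i iS; have := sneg i iS; nra.
  lra.
exact: (@precore R n N blk nu _ (cfun g h) (cblk gblk hblk)
     (fun j z => partial (theta nu) j z) (fun i j z => partial (cfun g h i) j z)
     xbar y w cth cD yx feas wlow winact res CP).
Unshelve. all: by end_near.
Qed.
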